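(* Let $\mathbf{M}\in\mathbb{R}^{n\times n}$ be a constant symmetric positive definite matrix, $V\in\mathcal{C}^1(\mathbb{R}^n,\mathbb{R})$, $\tilde{\mathbf{B}}:\mathbb{R}^{2n+m}\to\mathbb{R}^{n\times p}$, and $\mathbf{g}:\mathbb{R}^n\to\mathbb{R}^m$ a map each of whose components is a polynomial of degree at most two, with Jacobian $\nabla\mathbf{g}(\mathbf{q})\in\mathbb{R}^{m\times n}$. Let $h>0$ and let $(\mathbf{q}^k,\mathbf{v}^k,\boldsymbol{\lambda}^k)_{k=0}^{N}$ and inputs $(\mathbf{u}^{k+1/2})_{k=0}^{N-1}$ satisfy, for every $n=0,\dots,N-1$, with $\square^{n+1/2}:=\tfrac12(\square^{n+1}+\square^n)$ and $\mathbf{x}^{n+1/2}=(\mathbf{q}^{n+1/2},\mathbf{v}^{n+1/2},\boldsymbol{\lambda}^{n+1/2})$, $$\mathbf{q}^{n+1}-\mathbf{q}^n=h\,\mathbf{v}^{n+1/2},$$ $$\mathbf{M}(\mathbf{v}^{n+1}-\mathbf{v}^n)=-h\,\nabla V(\mathbf{q}^{n+1/2})-h\,\nabla\mathbf{g}(\mathbf{q}^{n+1/2})^\top\boldsymbol{\lambda}^{n+1/2}+h\,\tilde{\mathbf{B}}(\mathbf{x}^{n+1/2})\mathbf{u}^{n+1/2},$$ $$\mathbf{0}=h\,\nabla\mathbf{g}(\mathbf{q}^{n+1/2})\mathbf{v}^{n+1/2}.$$ If $\mathbf{g}(\mathbf{q}^0)=\mathbf{0}$, then $\mathbf{g}(\mathbf{q}^n)=\mathbf{0}$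 for all $n=0,\dots,N$. *)

(* Defs.v *)
From HB Require Import structures.
From mathcomp Require Import all_boot all_order all_algebra.
From mathcomp Require Import all_classical all_reals all_analysis.
Set Implicit Arguments. Unset Strict Implicit. Unset Printing Implicit Defensive.
Import Order.TTheory GRing.Theory Num.Theory.
Import numFieldNormedType.Exports.
Local Open Scope ring_scope.

Definition gradD (R : realType) (n : nat) (f : 'cV[R]_n -> R) (q : 'cV[R]_n)
  : 'cV[R]_n := \col_(i < n) ('D_(delta_mx i ord0) f q).

Definition jacobianD (R : realType) (n m : nat) (g : 'cV[R]_n -> 'cV[R]_m)
  (q : 'cV[R]_n) : 'M[R]_(m, n) :=
  \matrix_(i < m, j < n) ('D_(delta_mx j ord0) (fun x => g x i ord0) q).

Definition quadratic_map (R : realType) (n m : nat) (g : 'cV[R]_n -> 'cV[R]_m) :=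
  exists (c : 'cV[R]_m) (B : 'M[R]_(m, n)) (A : 'I_m -> 'M[R]_n),
    forall q i, g q i ord0 = c i ord0 + (B *m q) i ord0 + (q^T *m A i *m q) ord0 ord0.

Definition spd (R : realType) (n : nat) (M : 'M[R]_n) :=
  M^T = M /\ forall x : 'cV[R]_n, x != 0 -> 0 < (x^T *m M *m x) ord0 ord0.

Definition mid (R : realType) (V : lmodType R) (x : nat -> V) (k : nat) : V :=
  (2%:R^-1 : R) *: (x k.+1 + x k).

(* Main.v *)
Require Import Defs.
From HB Require Import structures.
From mathcomp Require Import all_boot all_order all_algebra.
From mathcomp Require Import all_classical all_reals all_analysis.
From mathcomp Require Import ring lra.
Import Order.TTheory GRing.Theory Num.Theory.
Import numFieldNormedType.Exports.
Local Open Scope ring_scope.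

Lemma derive_quad (R: realType) n (c : R) (w : 'rV[R]_n) (A : 'M[R]_n) (x v : 'cV[R]_n) :
  'D_v (fun y : 'cV[R]_n => c + (w *m y) 0 0 + (y^T *m A *m y) 0 0) x
   = (w *m v) 0 0 + (v^T *m A *m x) 0 0 + (x^T *m A *m v) 0 0.
Proof.
set a := _ + _ + _.
set b := (v^T *m A *m v) 0 0.
rewrite /derive.
apply: cvg_lim => //.
have E : forall t : R, t != 0 -> t^-1 *: (((fun y : 'cV[R]_n => c + (w *m y) 0 0 + (y^T *m A *m y) 0 0) \o shift x) (t *: v) -
     (c + (w *m x) 0 0 + (x^T *m A *m x) 0 0)) = a + t * b.
  move=> t t0 /=.
  have trE : (t *: v + x)^T = t *: v^T + x^T by rewrite linearD /= linearZ.
  rewrite /shift /= trE !(mulmxDl, mulmxDr) -!scalemxAl -?scalemxAr -?scalemxAl.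
  have aE : forall (M1 M2 : 'M[R]_1) , (M1 + M2) 0 0 = M1 0 0 + M2 0 0 by move=> *; rewrite mxE.
  have sE : forall (s : R) (M1 : 'M[R]_1) , (s *: M1) 0 0 = s * M1 0 0 by move=> *; rewrite mxE.
  rewrite !(aE, sE).
  rewrite /a /b; set p1 := (w *m x) 0 0; set p2 := (w *m v) 0 0.
  set p3 := (v^T *m A *m x) 0 0.
  set p4 := (x^T *m A *m v) 0 0. set p5 := (v^T *m A *m v) 0 0. set p6 := (x^T *m A *m x) 0 0.
  rewrite /GRing.scale /=.
  field.
  done.
apply: (@cvg_trans _ ((fun t : R => a + t * b) @ 0^')%classic).
  apply: near_eq_cvg; near=> t; rewrite E //.
  near: t; exact: nbhs_dnbhs_neq.
have H0 : ((fun t : R => a + t * b) @ (0 : R) --> a + 0 * b)%classic.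
  apply: cvgD; first exact: cvg_cst.
  apply: cvgMr_tmp; exact: cvg_id.
rewrite mul0r addr0 in H0.
apply: cvg_trans H0.
exact: cvg_app (@nbhs_dnbhs _ (0:R)).
Unshelve. end_near.
Qed.

Lemma quad_diff (R: realType) n (w : 'rV[R]_n) (A : 'M[R]_n) (y z : 'cV[R]_n) :
  let x := (2%:R^-1 : R) *: (y + z) in
  (w *m (y - z)) 0 0 + ((y - z)^T *m A *m x) 0 0 + (x^T *m A *m (y - z)) 0 0
  = ((w *m y) 0 0 + (y^T *m A *m y) 0 0) - ((w *m z) 0 0 + (z^T *m A *m z) 0 0).
Proof.
move=> x; rewrite /x.
have trE : forall (s : R) (a b : 'cV[R]_n), (s *: (a + b))^T = s *: a^T + s *: b^T.
  by move=> s a b; rewrite linearZ /= linearD /= scalerDr.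
have trB : forall (a b : 'cV[R]_n), (a - b)^T = a^T - b^T.
  by move=> a b; rewrite linearB.
rewrite trE trB !(mulmxDl, mulmxDr, mulmxBl, mulmxBr, mulmxN, mulNmx) -!scalemxAl -?scalemxAr -?scalemxAl.
have aE : forall (M1 M2 : 'M[R]_1) , (M1 + M2) 0 0 = M1 0 0 + M2 0 0 by move=> *; rewrite mxE.
have bE : forall (M1 M2 : 'M[R]_1) , (M1 - M2) 0 0 = M1 0 0 - M2 0 0 by move=> *; rewrite !mxE.
have sE : forall (s : R) (M1 : 'M[R]_1) , (s *: M1) 0 0 = s * M1 0 0 by move=> *; rewrite mxE.
have nE : forall (M1 : 'M[R]_1) , (- M1) 0 0 = - M1 0 0 by move=> *; rewrite !mxE.
rewrite ?mulmxDr !(aE, bE, sE, nE).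
field.
by [].
Qed.

Lemma lin_row (R: realType) n (w : 'rV[R]_n) (A : 'M[R]_n) (x e : 'cV[R]_n) :
  (w *m e) 0 0 + (e^T *m A *m x) 0 0 + (x^T *m A *m e) 0 0
  = ((w + (A *m x)^T + x^T *m A) *m e) 0 0.
Proof.
have aE : forall (M1 M2 : 'M[R]_1) , (M1 + M2) 0 0 = M1 0 0 + M2 0 0 by move=> *; rewrite mxE.
rewrite !mulmxDl !aE.
congr (_ + _ + _).
have -> : e^T *m A *m x = ((A *m x)^T *m e)^T by rewrite trmx_mul trmxK mulmxA.
by rewrite mxE.
Qed.

Theorem mainTheorem3 (R : realType) (n m p : nat)
  (M : 'M[R]_n) (V : 'cV[R]_n -> R)
  (Bt : 'cV[R]_(n + n + m) -> 'M[R]_(n, p))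
  (g : 'cV[R]_n -> 'cV[R]_m)
  (h : R) (N : nat)
  (q v : nat -> 'cV[R]_n) (lam : nat -> 'cV[R]_m) (u : nat -> 'cV[R]_p) :
  spd M ->
  (forall x, differentiable V x) -> continuous (gradD V) ->
  quadratic_map g ->
  0 < h ->
  (forall k, (k < N)%N ->
     [/\ q k.+1 - q k = h *: mid v k,
         M *m (v k.+1 - v k) =
           - (h *: gradD V (mid q k))
           - h *: ((jacobianD g (mid q k))^T *m mid lam k)
           + h *: (Bt (col_mx (col_mx (mid q k) (mid v k)) (mid lam k)) *m u k)
       & 0 = h *: (jacobianD g (mid q k) *m mid v k)]) ->
  g (q 0%N) = 0 ->
  forall k, (k <= N)%N -> g (q k) = 0.
Proof.
move=> _ _ _ [c [B [A Hg]]] _ Hstep g0.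
have step : forall k, (k < N)%N -> g (q k.+1) = g (q k).
  move=> k /Hstep [Hq _ Hj].
  have Jd : jacobianD g (mid q k) *m (q k.+1 - q k) = 0.
    by rewrite Hq -scalemxAr -Hj.
  apply/matrixP => i j; rewrite (ord1 j).
  apply/eqP; rewrite -subr_eq0; apply/eqP.
  rewrite !Hg.
  have fE : (fun y => g y i ord0) =
     (fun y => c i 0 + (row i B *m y) 0 0 + (y^T *m A i *m y) 0 0).
    by apply/funext => y; rewrite Hg -row_mul [(row _ _) _ _]mxE.
  have := congr1 (fun X : 'M[R]_(m,1) => X i ord0) Jd.
  rewrite /= [X in X = _ -> _]mxE [X in _ = X -> _]mxE.
  under eq_bigr => l _ do rewrite /jacobianD mxE fE derive_quad lin_row -colE mxE.
  have eW : forall (W : 'rV[R]_n) (d : 'cV[R]_n), (W *m d) 0 0 = \sum_l W 0 l * d l 0.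
    by move=> *; rewrite mxE.
  rewrite -eW -lin_row /mid quad_diff => H.
  have rB : forall y : 'cV[R]_n, (B *m y) i ord0 = (row i B *m y) 0 0.
    by move=> y; rewrite -row_mul [RHS]mxE.
  rewrite !rB.
  move: H; set a1 := (row i B *m q k.+1) 0 0; set a0 := (row i B *m q k) 0 0.
  set b1 := ((q k.+1)^T *m A i *m q k.+1) 0 0; set b0 := ((q k)^T *m A i *m q k) 0 0.
  move=> H; rewrite -H; ring.
elim=> [|k IH] Hk; first done.
by rewrite step // IH // ltnW.
Qed.
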